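(* Let $G$ be generated by the random planted model with parameters $n,k,d,p$ where $d\le 2pk/3$, and then let a monotone adversary add arbitrary edges with both endpoints in $V\setminus S$, producing $\tilde G$. If $k\ge 6\sqrt{6n\log n/p}$, then with high probability (over the randomness of the random planted model) every vertex of $S$ has strictly smaller degree in $\tilde G$ than every vertex of $V\setminus S$; in particular, the set of $k$ vertices of smallest degree in $\tilde G$ is exactly $S$.
   Context: Random planted model with parameters $n,k,d,p$: $V$ is a set of $n$ vertices and $S\subset V$ an arbitrary subset with $|S|=k$; edges are added arbitrarily inside $S$ so that the induced graph on $S$ is a connected $d$-regular bipartite graph with parts $S_1,S_2$; each pair in $S\times(V\setminus S)$ and each pair in $(V\setminus S)\times(V\setminus S)$ is made an edge independently with probability $p$. *)

(* Defs.v *)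
From mathcomp Require Import all_boot all_order all_algebra.
From mathcomp Require Import boolp reals exp.
Set Implicit Arguments. Unset Strict Implicit. Unset Printing Implicit Defensive.
Import Order.TTheory GRing.Theory Num.Theory.

Local Open Scope ring_scope.

Section Planted.
Variable n : nat.
Notation V := 'I_n.

Definition planted_graph (S : {set V}) (d : nat) (H : rel V) : Prop :=
  [/\ (forall u v, H u v = H v u) /\ (forall u, ~~ H u u),
      (forall u v, H u v -> (u \in S) && (v \in S)),
      (forall u, u \in S -> #|[set v | H u v]| = d),
      (exists S1 S2 : {set V}, [/\ [disjoint S1 & S2], S1 :|: S2 = S &
          forall u v, H u v -> ((u \in S1) && (v \in S2)) || ((u \in S2) && (v \in S1))])
    & (forall u v, u \in S -> v \in S -> connect H u v)].

(* The unordered pairs {u,v} (encoded as (u,v) with u < v) that are random: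
   those in S x (V\S) and in (V\S) x (V\S). *)
Definition random_pairs (S : {set V}) : {set V * V} :=
  [set e : V * V | (e.1 < e.2)%N & ~~ ((e.1 \in S) && (e.2 \in S))].

(* Probability of the outcome X (the set of random pairs that become edges):
   each random pair is an edge independently with probability p. *)
Definition outcome_prob (R : realType) (p : R) (S : {set V}) (X : {set V * V}) : R :=
  if X \subset random_pairs S then
    \prod_(e in random_pairs S) (if e \in X then p else 1 - p)
  else 0.

Definition adj (H : rel V) (X : {set V * V}) (A : rel V) (u v : V) : bool :=
  (u != v) && [|| H u v, (u, v) \in X, (v, u) \in X, A u v | A v u].

Definition deg (H : rel V) (X : {set V * V}) (A : rel V) (u : V) : nat :=
  #|[set v | adj H X A u v]|.

Definition adversary (S : {set V}) (A : rel V) : Prop :=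
  forall u v, A u v -> (u \notin S) && (v \notin S).

Definition good_event (S : {set V}) (H : rel V) (X : {set V * V}) : Prop :=
  forall A : rel V, adversary S A ->
    (forall u v, u \in S -> v \notin S -> (deg H X A u < deg H X A v)%N) /\
    (forall T : {set V}, #|T| = #|S| ->
       (forall u v, u \in T -> v \notin T -> (deg H X A u <= deg H X A v)%N) ->
       T = S).

Definition prob_good (R : realType) (p : R) (S : {set V}) (H : rel V) : R :=
  \sum_(X : {set V * V} | `[< good_event S H X >]) outcome_prob p S X.

End Planted.

(* Main.v *)
Require Import Defs.
From mathcomp Require Import all_boot all_order all_algebra.
From mathcomp Require Import boolp reals exp.
From mathcomp Require Import sequences.
From mathcomp Require Import ring lra zify.
Import Order.TTheory GRing.Theory Num.Theory.
Local Open Scope ring_scope.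

Section Comb.
Variable n : nat.
Notation V := 'I_n.

Definition inc (w : V) (e : V * V) := (e.1 == w) || (e.2 == w).
Definition oth (w : V) (e : V * V) := if e.1 == w then e.2 else e.1.
Definition ydeg (X : {set V * V}) (w : V) := #|[set e in X | inc w e]|.

Lemma oth_inj (w : V) (P : {set V * V}) :
  (forall e, e \in P -> (e.1 < e.2)%N) ->
  {in [set e in P | inc w e] &, injective (oth w)}.
Proof.
move=> HP [a b] [a' b'] /setIdP[/HP /= h1 i1] /setIdP[/HP /= h2 i2].
rewrite /oth /=; rewrite /inc /= in i1 i2.
case: (a =P w) i1 => [aw|na] /= i1; case: (a' =P w) i2 => [aw'|na'] /= i2 E.
- by subst.
- move/eqP: i2 => i2; subst; lia.
- move/eqP: i1 => i1; subst; lia.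
- move/eqP: i1 => i1; move/eqP: i2 => i2; subst; by [].
Qed.

Lemma rp_lt (S : {set V}) e : e \in random_pairs S -> (e.1 < e.2)%N.
Proof. by rewrite inE => /andP[]. Qed.

Lemma ydeg_le (H : rel V) (X : {set V * V}) (A : rel V) S d u :
  planted_graph S d H -> adversary S A -> u \in S ->
  (deg H X A u <= d + ydeg X u)%N.
Proof.
move=> [_ _ Hd _ _] HA uS.
rewrite /deg -(Hd u uS) /ydeg.
apply: (leq_trans (n := #|[set v | H u v] :|: oth u @: [set e in X | inc u e]|)).
  apply: subset_leq_card; apply/subsetP => v; rewrite !inE /adj.
  case/andP=> uv /orP [h|/orP [h|/orP [h|/orP [h|h]]]].
  - by rewrite h.
  - apply/orP; right; apply/imsetP; exists (u, v); first by rewrite !inE h /inc eqxx.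
    by rewrite /oth /= eqxx.
  - apply/orP; right; apply/imsetP; exists (v, u); first by rewrite !inE h /inc eqxx orbT.
    by rewrite /oth /= eq_sym (negbTE uv).
  - by move: (HA _ _ h); rewrite uS.
  - by move: (HA _ _ h); rewrite uS andbF.
rewrite cardsU; apply: leq_trans (leq_subr _ _) _.
by rewrite leq_add2l leq_imset_card.
Qed.

Lemma ydeg_ge (H : rel V) (X : {set V * V}) (A : rel V) S v :
  X \subset random_pairs S -> (ydeg X v <= deg H X A v)%N.
Proof.
move=> XS; rewrite /ydeg /deg.
have lt e : e \in X -> (e.1 < e.2)%N by move=> eX; exact: rp_lt (subsetP XS _ eX).
rewrite -(card_in_imset (@oth_inj v X lt)).
apply: subset_leq_card; apply/subsetP => x /imsetP [[a b] /setIdP [eX ie] ->].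
move: (lt _ eX) => /= ab.
rewrite inE /adj /oth /=; rewrite /inc /= in ie.
case: (a =P v) ie => [av|na] /= ie.
- subst a; have -> : (v != b) by apply/eqP => E; subst; lia.
  by rewrite eX orbT.
- move/eqP: ie => ie; subst b.
  have -> : (v != a) by apply/eqP => E; subst; lia.
  by rewrite eX !orbT.
Qed.

Lemma m_le (S : {set V}) u : u \in S ->
  (#|[set e in random_pairs S | inc u e]| <= n - #|S|)%N.
Proof.
move=> uS.
rewrite -(card_in_imset (@oth_inj u _ (@rp_lt S))).
have -> : (n - #|S| = #|~: S|)%N by rewrite [RHS]cardsCs setCK card_ord.
apply: subset_leq_card; apply/subsetP => x /imsetP [[a b] /setIdP [eX ie] ->].
move: eX; rewrite !inE /= /oth /= => /andP [_ nb]; rewrite /inc /= in ie.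
case: (a =P u) ie => [au|na] /= ie; first by subst; move: nb; rewrite uS.
by move/eqP: ie => ie; subst b; move: nb; rewrite uS andbT.
Qed.

Lemma m_ge (S : {set V}) v : v \notin S ->
  (n - 1 <= #|[set e in random_pairs S | inc v e]|)%N.
Proof.
move=> vS.
rewrite -(card_in_imset (@oth_inj v _ (@rp_lt S))).
have -> : (n - 1 = #|[set~ v]|)%N by rewrite cardsC1 card_ord subn1.
apply: subset_leq_card; apply/subsetP => x; rewrite !inE => xv.
case: (ltngtP v x) => [vx|xv'|E]; last by move: xv; rewrite -val_eqE /= E eqxx.
- apply/imsetP; exists (v, x); last by rewrite /oth /= eqxx.
  by rewrite !inE /= vx (negbTE vS) /inc eqxx.
- apply/imsetP; exists (x, v); last by rewrite /oth /= (negbTE xv).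
  by rewrite !inE /= xv' (negbTE vS) andbF /inc eqxx orbT.
Qed.

End Comb.
Arguments inc {n}. Arguments oth {n}. Arguments ydeg {n}.
Arguments ydeg_le {n}. Arguments ydeg_ge {n}. Arguments m_le {n}. Arguments m_ge {n}.
Section Prob.
Variable R : realType.
Variable n : nat.
Notation V := 'I_n.

Lemma sum_op_prod (p : R) (S : {set V}) (g : V * V -> R) :
  \sum_(X : {set V * V}) outcome_prob p S X * \prod_(e in X) g e =
  \prod_(e in random_pairs S) (1 - p + p * g e).
Proof.
set RP := random_pairs S.
have -> : \prod_(e in RP) (1 - p + p * g e) =
  \prod_e ((if e \in RP then p * g e else 0) + (if e \in RP then 1 - p else 1)).
  rewrite [LHS]big_mkcond /=; apply: eq_bigr => e _.
  by case: ifP => _; rewrite ?add0r // addrC.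
rewrite bigA_distr; apply: eq_bigr => X _.
rewrite /outcome_prob -/RP.
case: ifP => [XS|/negbT XS].
  rewrite big_mkcond [X in _ * X]big_mkcond /= -big_split /=.
  apply: eq_bigr => e _.
  case eX: (e \in X); case eR: (e \in RP) => //.
  - by move: (subsetP XS e); rewrite eX eR => /(_ isT).
  - by rewrite mulr1.
  - by rewrite mulr1.
have [e eX eR] := subsetPn XS.
by rewrite mul0r (bigD1 e) //= eX (negbTE eR) mul0r.
Qed.

Lemma op_ge0 (p : R) (S : {set V}) X : 0 <= p -> p <= 1 -> 0 <= outcome_prob p S X.
Proof.
move=> p0 p1; rewrite /outcome_prob; case: ifP => // _.
by apply: prodr_ge0 => e _; case: ifP; rewrite // subr_ge0.
Qed.

Lemma op_sum1 (p : R) (S : {set V}) : \sum_(X : {set V * V}) outcome_prob p S X = 1.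
Proof.
have E := sum_op_prod p S (fun _ => 1).
rewrite (eq_bigr (fun X => outcome_prob p S X * \prod_(e in X) (fun _ : V * V => 1) e)); last first.
  by move=> X _; rewrite big1 ?mulr1.
by rewrite E big1 // => e _; rewrite mulr1 subrK.
Qed.

Lemma prod_if (A : {set V * V}) (P : pred (V * V)) (c : R) :
  \prod_(e in A) (if P e then c else 1) = c ^+ #|[set e in A | P e]|.
Proof.
rewrite -big_mkcondr /= -prodr_const; apply: eq_bigl => e; by rewrite inE.
Qed.

Lemma mgf (p : R) (S : {set V}) (w : V) (b : R) :
  \sum_(X : {set V * V}) outcome_prob p S X * b ^+ ydeg X w =
  (1 - p + p * b) ^+ #|[set e in random_pairs S | inc w e]|.
Proof.
rewrite (eq_bigr (fun X => outcome_prob p S X *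
   \prod_(e in X) (fun e => if inc w e then b else 1) e)); last first.
  by move=> X _; rewrite /ydeg -prod_if.
rewrite sum_op_prod -prod_if; apply: eq_bigr => e _ /=.
by case: ifP => _; rewrite ?mulr1 ?subrK.
Qed.

End Prob.

Section Ana.
Variable R : realType.

Lemma exp_up (x : R) : 0 <= x -> x <= 1/11 -> expR x <= 1 + x + 11/10 * x^+2.
Proof.
move=> x0 x1.
have h := expR_ge1Dx (- x); rewrite expRN in h.
have E0 := expR_gt0 x.
have h2 : expR x * (1 - x) <= 1.
  by have := ler_wpM2l (ltW E0) h; rewrite mulfV ?gt_eqF.
nra.
Qed.

Lemma exp_down (x : R) : 0 <= x -> expR (- x) <= 1 - x + 11/10 * x^+2.
Proof.
move=> x0.
have h := expR_ge1Dx x.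
have E0 := expR_gt0 (- x).
have h2 : expR (- x) * expR x = 1 by rewrite -expRD addNr expR0.
nra.
Qed.

Lemma pow_exp (a : R) m : 0 <= 1 + a -> (1 + a) ^+ m <= expR (m%:R * a).
Proof.
move=> a0; rewrite expRM_natl; apply: lerXn2r; rewrite ?nnegrE ?expR_ge0 //.
exact: expR_ge1Dx.
Qed.

End Ana.
Section Tail.
Variable R : realType.
Variable n : nat.
Notation V := 'I_n.

Lemma tail (p : R) (S : {set V}) (w : V) (Q : pred {set V * V}) (K b : R) :
  0 <= p -> p <= 1 -> 0 <= K -> 0 <= b ->
  (forall X, Q X -> 1 <= K * b ^+ ydeg X w) ->
  \sum_(X | Q X) outcome_prob p S X <=
    K * (1 - p + p * b) ^+ #|[set e in random_pairs S | inc w e]|.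
Proof.
move=> p0 p1 K0 b0 HQ.
rewrite -mgf mulr_sumr big_mkcond /=; apply: ler_sum => X _.
have o0 := @op_ge0 R n p S X p0 p1.
rewrite mulrCA; case: ifP => q.
  by rewrite -[X in X <= _]mulr1; apply: ler_wpM2l => //; apply: HQ.
by apply: mulr_ge0 => //; apply: mulr_ge0 => //; apply: exprn_ge0.
Qed.

End Tail.
Arguments exp_up {R}. Arguments exp_down {R}. Arguments pow_exp {R}. Arguments tail {R n}.
Section Good.
Variable R : realType.
Variable n : nat.
Notation V := 'I_n.

Lemma good_of (S : {set V}) (H : rel V) d (X : {set V * V}) (th : R) :
  planted_graph S d H -> X \subset random_pairs S ->
  (forall u, u \in S -> (d + ydeg X u)%:R < th) ->
  (forall v, v \notin S -> th < (ydeg X v)%:R) ->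
  good_event S H X.
Proof.
move=> PG XS hu hv A HA.
have lt : forall u v, u \in S -> v \notin S -> (deg H X A u < deg H X A v)%N.
  move=> u v uS vS.
  apply: (leq_ltn_trans (ydeg_le H X A S d u PG HA uS)).
  apply: (leq_trans _ (ydeg_ge H X A S v XS)).
  by rewrite -(ltr_nat R); apply: lt_trans (hu u uS) (hv v vS).
split=> // T cT hT.
apply/eqP; rewrite eq_sym eqEcard cT; apply/andP; split => //.
apply/subsetP => u uS; apply/negPn/negP => uT.
have : ~~ (T \subset S).
  apply/negP => TS; have /eqP E : T == S.
    by rewrite eqEcard TS /=; exact: (eq_leq (esym cT)).
  by subst; rewrite uS in uT.
case/subsetPn => v vT vS.
by have := hT v u vT uT; rewrite leqNgt (lt u v uS vS).
Qed.

End Good.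
Theorem lemma1p10 (R : realType) :
  forall eps : R, 0 < eps ->
  exists N : nat, forall (n k d : nat) (p : R) (S : {set 'I_n}) (H : rel 'I_n),
    (N <= n)%N ->
    0 < p -> p <= 1 ->
    #|S| = k ->
    planted_graph S d H ->
    d%:R <= 2 * p * k%:R / 3 ->
    6 * Num.sqrt (6 * n%:R * ln (n%:R) / p) <= k%:R ->
    1 - eps <= prob_good p S H.
Proof.
move=> eps eps0.
pose K : R := Num.max 5 (- (220/23) * ln eps).
exists (Num.trunc (expR K)).+1.
move=> n k d p S H nN p0 p1 cS PG hd hk.
have n0 : (0 < n)%N by apply: leq_trans nN.
have nR : 0 < n%:R :> R by rewrite ltr0n.
have n1 : 1 <= n%:R :> R by rewrite ler1n.
set L := ln (n%:R : R).
have LK : K <= L.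
  rewrite -[K]expRK /L ler_ln ?posrE ?expR_gt0 //.
  apply: ltW; apply: lt_le_trans (truncnS_gt _) _; by rewrite ler_nat.
have L5 : 5 <= L by apply: le_trans LK; rewrite le_max lexx.
have Leps : - (220/23) * ln eps <= L by apply: le_trans LK; rewrite le_max lexx orbT.
have kn : (k <= n)%N by rewrite -cS; apply: (leq_trans (max_card _)); rewrite card_ord.
have kR : k%:R <= n%:R :> R by rewrite ler_nat.
have k0 : 0 <= k%:R :> R by rewrite ler0n.
move: hk; set s := Num.sqrt _ => hk.
have s0 : 0 <= s := sqrtr_ge0 _.
have sE : s = Num.sqrt (6 * n%:R * L / p) := erefl.
have ps2 : p * s ^+ 2 = 6 * n%:R * L.
  rewrite sE sqr_sqrtr; last first.
    by apply: divr_ge0; [apply: mulr_ge0; [apply: mulr_ge0 => //; lra|lra] | lra].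
  field; exact: lt0r_neq0.
have s5 : 5 <= s by nra.
pose lam := 9 * s / (22 * n%:R).
pose t := 9 * p * s / 10.
pose th := (n%:R - 1) * p - t.
have lam0 : 0 <= lam by rewrite /lam; apply: divr_ge0; [lra|apply: mulr_ge0; lra].
have lam1 : lam <= 1/11.
  by rewrite /lam ler_pdivrMr ?mulr_gt0 //; lra.
have margin : d%:R + 2 * t <= (k%:R - 1) * p.
  have h1 : 0 <= p * (s - 5) by apply: mulr_ge0; lra.
  have h2 : 0 <= p * (k%:R - 6 * s) by apply: mulr_ge0; lra.
  rewrite /t; lra.
have ex : 11/10 * n%:R * p * lam ^+ 2 - lam * t = - (243/220) * L.
  transitivity (- (81/440) * (p * s ^+ 2) / n%:R).
    by rewrite /lam /t; field; exact: lt0r_neq0.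
  by rewrite ps2; field; exact: lt0r_neq0.
pose bad (w : 'I_n) (X : {set 'I_n * 'I_n}) : bool :=
  if w \in S then th <= (d + ydeg X w)%:R else (ydeg X w)%:R <= th.
have bw : forall w, \sum_(X | bad w X) outcome_prob p S X <= expR (- (243/220) * L).
  move=> w; rewrite /bad; case wS : (w \in S).
  - have b1 := expR_ge1Dx lam.
    have bup := exp_up lam lam0 lam1.
    apply: le_trans (@tail R n p S w _ (expR (lam * (d%:R - th))) (expR lam) _ _ _ _ _) _.
    + exact: ltW.
    + exact: p1.
    + exact: expR_ge0.
    + exact: expR_ge0.
    + move=> X /= h; rewrite natrD in h.
      rewrite -expRM_natl -expRD -[X in X <= _]expR0 ler_expR.
      have hh : 0 <= lam * (d%:R + (ydeg X w)%:R - th) by apply: mulr_ge0 => //; lra.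
      lra.
    have mle := m_le S w wS; rewrite cS in mle.
    have mR : (#|[set e in random_pairs S | inc w e]|)%:R <= n%:R - k%:R :> R.
      by rewrite -natrB // ler_nat.
    set m := #|[set e in random_pairs S | inc w e]| in mR *.
    have -> : 1 - p + p * expR lam = 1 + p * (expR lam - 1) by ring.
    apply: le_trans (ler_wpM2l (expR_ge0 _) (pow_exp _ m _)) _.
      have eb : 0 <= expR lam - 1 by lra.
      by have := mulr_ge0 (ltW p0) eb; lra.
    rewrite -expRD ler_expR.
    have h1 : m%:R * (p * (expR lam - 1)) <= (n%:R - k%:R) * (p * (expR lam - 1)).
      apply: ler_wpM2r => //; apply: mulr_ge0; lra.
    have h2 : (n%:R - k%:R) * (p * (expR lam - 1)) <= (n%:R - k%:R) * (p * (lam + 11/10 * lam ^+ 2)).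
      apply: ler_wpM2l; first lra.
      apply: ler_wpM2l; lra.
    have h3 : lam * d%:R <= lam * ((k%:R - 1) * p - 2 * t) by apply: ler_wpM2l => //; lra.
    have h4 : 0 <= k%:R * (p * (11/10 * lam ^+ 2)).
      by apply: mulr_ge0 => //; apply: mulr_ge0; [lra | apply: mulr_ge0; [lra|apply: sqr_ge0]].
    rewrite /th; nra.
  - have b1 := expR_ge1Dx (- lam).
    have bup := exp_down lam lam0.
    have bl1 : expR (- lam) <= 1 by rewrite -expR0 ler_expR; lra.
    apply: le_trans (@tail R n p S w _ (expR (lam * th)) (expR (- lam)) _ _ _ _ _) _.
    + exact: ltW.
    + exact: p1.
    + exact: expR_ge0.
    + exact: expR_ge0.
    + move=> X /= h.
      rewrite -expRM_natl -expRD -[X in X <= _]expR0 ler_expR.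
      have hh : 0 <= lam * (th - (ydeg X w)%:R) by apply: mulr_ge0 => //; lra.
      lra.
    have mge := m_ge S w (negbT wS).
    have mR : n%:R - 1 <= (#|[set e in random_pairs S | inc w e]|)%:R :> R.
      have -> : n%:R - 1 = (n - 1)%:R :> R by rewrite natrB.
      by rewrite ler_nat.
    set m := #|[set e in random_pairs S | inc w e]| in mR *.
    have -> : 1 - p + p * expR (- lam) = 1 + p * (expR (- lam) - 1) by ring.
    apply: le_trans (ler_wpM2l (expR_ge0 _) (pow_exp _ m _)) _.
      by have := mulr_ge0 (ltW p0) (expR_ge0 (- lam)); lra.
    rewrite -expRD ler_expR.
    have h1 : m%:R * (p * (expR (- lam) - 1)) <= (n%:R - 1) * (p * (expR (- lam) - 1)).
      apply: ler_wnM2r => //; rewrite -(mulr0 p); apply: ler_wpM2l; lra.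
    have h2 : (n%:R - 1) * (p * (expR (- lam) - 1)) <= (n%:R - 1) * (p * (- lam + 11/10 * lam ^+ 2)).
      apply: ler_wpM2l; first lra.
      apply: ler_wpM2l; lra.
    have h4 : 0 <= p * (11/10 * lam ^+ 2).
      by apply: mulr_ge0; [lra | apply: mulr_ge0; [lra|apply: sqr_ge0]].
    rewrite /th; lra.
have tot := @op_sum1 R n p S.
rewrite (bigID (fun X => `[< good_event S H X >])) /= in tot.
suff hb : \sum_(X | ~~ `[< good_event S H X >]) outcome_prob p S X <= eps.
  rewrite /prob_good; lra.
apply: le_trans (_ : \sum_(X : {set 'I_n * 'I_n}) \sum_(w : 'I_n)
    (if bad w X then outcome_prob p S X else 0) <= _).
  rewrite big_mkcond; apply: ler_sum => X _.
  have o0 := @op_ge0 R n p S X (ltW p0) p1.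
  have s0' : 0 <= \sum_(w : 'I_n) (if bad w X then outcome_prob p S X else 0).
    by apply: sumr_ge0 => w _; case: ifP.
  case: ifP => g //.
  case XS : (X \subset random_pairs S); last by rewrite {1}/outcome_prob XS.
  case: (boolP [exists w, bad w X]) => [/existsP[w bwX] | /existsPn nb].
    rewrite (bigD1 w) //= bwX lerDl; apply: sumr_ge0 => w' _; by case: ifP.
  exfalso; move/negP: g; apply; apply/asboolP.
  apply: (@good_of R n S H d X th PG XS).
    by move=> u uS; move: (nb u); rewrite /bad uS -ltNge.
  by move=> v vS; move: (nb v); rewrite /bad (negbTE vS) -ltNge.
rewrite exchange_big /=.
apply: le_trans (_ : \sum_(w : 'I_n) expR (- (243/220) * L) <= _).
  apply: ler_sum => w _; rewrite -big_mkcond; exact: bw.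
rewrite sumr_const card_ord -[X in X <= _]mulr_natl.
have nE : n%:R = expR L by rewrite /L lnK // posrE.
have eE : eps = expR (ln eps) by rewrite lnK // posrE.
rewrite nE -expRD [X in _ <= X]eE ler_expR; lra.
Qed.
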